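(* Let $n$ be even. The expected runtime of the SD-(1+1) EA with parameter $R$, where $n+1\le R\le n^{O(1)}$, on $\mathrm{LeadingOnes}$ is $O(n^2)$.
   Context: $\mathrm{LeadingOnes}(x_1,\dots,x_n)=\sum_{i=1}^n\prod_{j=1}^i x_j$. The SD-(1+1) EA with parameter $R\ge1$ maximizing $f\colon\{0,1\}^n\to\mathbb{R}$ ($n$ even) works as follows: choose $x$ uniformly at random from $\{0,1\}^n$, set strength $r\gets 1$ and counter $u\gets0$. In each iteration: create $y$ from $x$ by flipping each bit independently with probability $r/n$; set $u\gets u+1$. If $f(y)>f(x)$, set $x\gets y$, $r\gets1$, $u\gets0$. Otherwise, if $f(y)=f(x)$ and $r=1$, set $x\gets y$; and (in the case $f(y)\le f(x)$) if $u>2(en/r)^r\ln(nR)$, set $r\gets\min\{r+1,n/2\}$ and $u\gets 0$. The runtime is the number of iterations until a global maximum is first created. *)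

(* Defs.v *)
From HB Require Import structures.
From mathcomp Require Import all_boot all_order all_algebra.
From mathcomp Require Import reals ereal sequences exp.
Set Implicit Arguments. Unset Strict Implicit. Unset Printing Implicit Defensive.
Import Order.TTheory GRing.Theory Num.Theory.
Local Open Scope ring_scope.

Section SDEA.
Variable R : realType.
Variable n : nat.

Definition bits := {ffun 'I_n -> bool}.

Definition LeadingOnes (x : bits) : nat :=
  \sum_(i < n) \prod_(j < n | (j <= i)%N) (x j : nat).

Definition ones : bits := [ffun => true].

(* probability that standard bit mutation with rate r/n turns x into y *)
Definition mutprob (r : nat) (x y : bits) : R :=
  \prod_(i < n) (if x i != y i then r%:R / n%:R else 1 - r%:R / n%:R).

(* state of the algorithm: current search point x, strength r, counter u *)
Definition state := (bits * nat * nat)%type.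

Definition threshold (Rp : R) (r : nat) : R :=
  2 * (expR 1 * n%:R / r%:R) ^+ r * ln (n%:R * Rp).

Definition sd_step (Rp : R) (s : state) (y : bits) : state :=
  let: (x, r, u) := s in
  let u' := u.+1 in
  if (LeadingOnes x < LeadingOnes y)%N then (y, 1%N, 0%N)
  else
    let x' := if (LeadingOnes y == LeadingOnes x) && (r == 1%N) then y else x in
    if threshold Rp r < u'%:R then (x', minn r.+1 n./2, 0%N)
    else (x', r, u').

(* survival: probability that, started in state s, none of the next t
   offspring is a global maximum *)
Fixpoint survive (Rp : R) (t : nat) (s : state) : R :=
  match t with
  | 0 => 1
  | t'.+1 =>
      \sum_(y : bits)
        mutprob s.1.2 s.1.1 y *
        (if y == ones then 0 else survive Rp t' (sd_step Rp s y))
  end.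

(* P(T > t), where T is the runtime: the initial point is uniform, r = 1,
   u = 0, and T > t iff no global maximum is among the initial point and
   the first t offspring. *)
Definition tail_prob (Rp : R) (t : nat) : R :=
  (2 ^+ n)^-1 * \sum_(x0 : bits)
     (if x0 == ones then 0 else survive Rp t (x0, 1%N, 0%N)).

(* expected runtime E[T] = sum_{t >= 0} P(T > t), in the extended reals *)
Definition expected_runtime (Rp : R) : \bar R :=
  (\sum_(0 <= t <oo) (tail_prob Rp t)%:E)%E.

End SDEA.

(* Main.v *)
Require Import Defs.
From HB Require Import structures.
From mathcomp Require Import all_boot all_order all_algebra.
From mathcomp Require Import reals ereal sequences exp.
From mathcomp Require Import topology normedtype.
From mathcomp Require Import zify ring lra.
Import Order.TTheory GRing.Theory Num.Theory.
Local Open Scope ring_scope.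
Set Implicit Arguments. Unset Strict Implicit. Unset Printing Implicit Defensive.

Module P1.

Section Comb.
Local Close Scope ring_scope.
Variable n : nat.

Definition pre (x : bits n) (k : nat) : bool := [forall j : 'I_n, (j <= k)%N ==> x j].

Lemma prod_bool_nat (x : bits n) (i : nat) :
  \prod_(j < n | (j <= i)%N) (x j : nat) = pre x i.
Proof.
have [H|H] := boolP (pre x i).
  rewrite big1 // => j Hj; move/forallP: H => H.
  by have := H j; rewrite Hj /= => ->.

move: H; rewrite /pre negb_forall => /existsP [j Hj].
move: Hj; rewrite negb_imply => /andP [Hji Hxj].
by rewrite (bigD1 j) //= (negbTE Hxj).
Qed.

Lemma pre_mono (x : bits n) i k : (k <= i)%N -> pre x i -> pre x k.
Proof.
move=> Hki /forallP H; apply/forallP => j; apply/implyP => Hj.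
by have := H j; rewrite (leq_trans Hj Hki).
Qed.

Lemma LO_E (x : bits n) : LeadingOnes x = \sum_(0 <= i < n) pre x i.
Proof.
rewrite /LeadingOnes big_mkord; apply: eq_bigr => i _; exact: prod_bool_nat.
Qed.

Lemma LO_le (x : bits n) : (LeadingOnes x <= n)%N.
Proof.
rewrite LO_E; apply: leq_trans (_ : \sum_(0 <= i < n) 1 <= n)%N.
  by apply: leq_sum => i _; case: pre.
by rewrite sum_nat_const_nat subn0 muln1.
Qed.

Lemma LO_gt (x : bits n) k : (k < LeadingOnes x)%N = (k < n)%N && pre x k.
Proof.
rewrite LO_E.
case: (ltnP k n) => Hkn /=; last first.
  apply/negbTE; rewrite -leqNgt; apply: leq_trans Hkn.
  apply: leq_trans (_ : \sum_(0 <= i < n) 1 <= n)%N.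
    by apply: leq_sum => i _; case: pre.
  by rewrite sum_nat_const_nat subn0 muln1.
rewrite (big_cat_nat (n:=k.+1)) //=.
case Hp: (pre x k).
  rewrite (eq_big_nat _ _ (F2 := fun _ => 1%N)); last first.
    by move=> i /andP [_ Hi]; rewrite (@pre_mono x k i Hi Hp).
  by rewrite sum_nat_const_nat subn0 muln1 ltn_addr.
rewrite big_nat_recr //= Hp addn0.
rewrite [X in (_ + X)%N]big1_seq ?addn0; last first.
  move=> i; rewrite /= mem_index_iota => /andP [Hi _].
  case Hq: (pre x i) => //; by move: Hp; rewrite (@pre_mono x i k (ltnW Hi) Hq).
rewrite ltnNge; apply/negbF.
apply: leq_trans (_ : \sum_(0 <= i < k) 1 <= k)%N.
  by apply: leq_sum => i _; case: pre.
by rewrite sum_nat_const_nat subn0 muln1.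
Qed.

Lemma LO_ones_lt (x : bits n) : x != ones n -> (LeadingOnes x < n)%N.
Proof.
move=> Hx; rewrite ltn_neqAle LO_le andbT; apply: contraNneq Hx => Heq.
apply/eqP/ffunP => j; rewrite ffunE.
have n0 : 0 < n by apply: leq_ltn_trans (leq0n j) (ltn_ord j).
have Hn1 : n.-1 < n by rewrite prednK.
have := LO_gt x n.-1; rewrite Heq Hn1 /= => /esym Hp.
by have := forallP Hp j; rewrite -ltnS prednK // ltn_ord.
Qed.

Lemma LO_ones : LeadingOnes (ones n) = n.
Proof.
apply/eqP; rewrite eqn_leq LO_le /=.
case: (posnP n) => [->//|n0].
rewrite -{1}(prednK n0) LO_gt prednK // leqnn /=; apply/forallP => j; by rewrite ffunE implybT.
Qed.

End Comb.

End P1.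
Import P1.

Module P2.

Section Mut.
Variable R : realType.
Variable n : nat.

Lemma sum_prod_bits (G : 'I_n -> bool -> R) :
  \sum_(y : bits n) \prod_(i < n) G i (y i) = \prod_(i < n) (G i true + G i false).
Proof.
rewrite -[LHS]/(\sum_(y : {ffun _ -> _}) _) -(@bigA_distr_bigA R 0 1 *%R +%R _ _ G) /=.
by apply: eq_bigr => i _; rewrite big_bool.
Qed.

Lemma sum_mut (r : nat) (x : bits n) : \sum_(y : bits n) mutprob R r x y = 1.
Proof.
rewrite /mutprob (sum_prod_bits (fun i b => if x i != b then r%:R / n%:R else 1 - r%:R / n%:R)).
by apply: big1 => i _; case: (x i) => /=; rewrite addrC ?subrK ?addrNK // addrC subrK.
Qed.

Lemma ind_pre (y : bits n) k :
  ((pre y k : nat)%:R : R) = \prod_(j < n) (if (j <= k)%N then ((y j : nat)%:R : R) else 1).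
Proof.
have [H|H] := boolP (pre y k).
  rewrite big1 // => j _; move/forallP: H => H.
  by case: ifP => // Hj; have := H j; rewrite Hj /= => ->.
move: H; rewrite /pre negb_forall => /existsP [j Hj].
move: Hj; rewrite negb_imply => /andP [Hji Hxj].
rewrite (bigD1 j) //= Hji (negbTE Hxj) mul0r.
done.
Qed.

Lemma sum_impr (r : nat) (x : bits n) :
  (LeadingOnes x < n)%N ->
  \sum_(y : bits n) mutprob R r x y * ((LeadingOnes x < LeadingOnes y)%N : nat)%:R
  = r%:R / n%:R * (1 - r%:R / n%:R) ^+ LeadingOnes x.
Proof.
set k := LeadingOnes x => Hk.
set a : R := r%:R / n%:R.
have E : forall y : bits n, mutprob R r x y * ((k < LeadingOnes y)%N : nat)%:R
   = \prod_(i < n) ((if x i != y i then a else 1 - a) *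
                    (if (i <= k)%N then ((y i : nat)%:R : R) else 1)).
  move=> y; rewrite LO_gt Hk /= ind_pre /mutprob -big_split //=.
rewrite (eq_bigr _ (fun y _ => E y)).
rewrite (sum_prod_bits (fun i b => (if x i != b then a else 1 - a) *
                    (if (i <= k)%N then ((b : nat)%:R : R) else 1))) /=.
have Hx : forall j : 'I_n, (j < k)%N -> x j.
  move=> j Hj; have := LO_gt x j; rewrite -/k Hj ltn_ord /= => /esym /forallP H.
  by have := H j; rewrite leqnn.
have Hxk : forall j : 'I_n, nat_of_ord j = k -> x j = false.
  move=> j Hj; apply/negbTE/negP => Hxj.
  have := LO_gt x k; rewrite -/k ltnn Hk /= => /esym/negbT/negP; apply.
  apply/forallP => i; apply/implyP => Hi.
  rewrite leq_eqVlt in Hi; case/orP: Hi => [/eqP Hi|Hi]; last exact: Hx.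
  by have -> : i = j by apply: val_inj; rewrite /= Hi Hj.
transitivity (\prod_(i < n | (i < k.+1)%N) (if (i < k)%N then 1 - a else a)).
  rewrite [RHS]big_mkcond; apply: eq_bigr => i _.
  case: ltnP => Hik /=.
    have Hik' : (i <= k)%N by [].
    rewrite Hik' !mulr1 !mulr0 addr0.
    case: ltnP => Hik2.
      by rewrite Hx.
    have Hi : nat_of_ord i = k by apply/eqP; rewrite eqn_leq Hik2 Hik'.
    by rewrite Hxk.
  have Hik' : (i <= k)%N = false by apply/negbTE; rewrite -ltnNge.
  rewrite Hik' !mulr1; case: (x i) => /=; [exact: subrK | by rewrite addrC subrK].
rewrite -(big_ord_widen n (fun i : nat => if (i < k)%N then 1 - a else a) Hk).
rewrite big_ord_recr /= ltnn mulrC; congr (_ * _).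
by rewrite (eq_bigr (fun=> 1 - a)) ?prodr_const ?card_ord // => i _; rewrite ltn_ord.
Qed.

End Mut.

End P2.
Import P2.

Module P3.

Section Lyap.
Variable R : realType.
Variable n : nat.
Variable Rp : R.
Hypothesis n2 : (2 <= n)%N.
Hypothesis Rp1 : 1 <= Rp.

Definition cap := n./2.
Definition pr (i r : nat) : R := r%:R / n%:R * (1 - r%:R / n%:R) ^+ i.
Definition kk (r u : nat) : nat := maxn ((Num.truncn (threshold n Rp r)).+1 - u) 1.

Fixpoint Vf (i f r : nat) : R :=
  match f with
  | 0 => (pr i r)^-1
  | f'.+1 => (pr i r)^-1 + (1 - pr i r) ^+ kk r 0 * Vf i f' r.+1
  end.
Definition V i r := Vf i (cap - r) r.
Definition X i r := if (r < cap)%N then V i r.+1 else 0.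
Definition W i r u := (pr i r)^-1 + (1 - pr i r) ^+ kk r u * X i r.
Definition F j := \sum_(j <= k < n) W k 1 0.
Definition g (s : state n) := F (LeadingOnes s.1.1).+1 + W (LeadingOnes s.1.1) s.1.2 s.2.

Lemma eqle (x y : R) : x = y -> x <= y.
Proof. by move=> ->. Qed.

Lemma cap_ge1 : (1 <= cap)%N.
Proof. rewrite /cap; lia. Qed.

Lemma cap_lt : (cap < n)%N.
Proof. rewrite /cap; lia. Qed.

Lemma pr_bounds i r : (1 <= r)%N -> (r <= cap)%N -> 0 < pr i r /\ pr i r <= 1.
Proof.
move=> r1 rc.
have n0 : 0 < (n%:R : R) by rewrite ltr0n; lia.
have a0 : 0 < (r%:R / n%:R : R) by rewrite divr_gt0 // ltr0n.
have a1 : (r%:R / n%:R : R) < 1.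
  by rewrite ltr_pdivrMr // mul1r ltr_nat; have := cap_lt; lia.
have b0 : 0 < 1 - (r%:R / n%:R : R) by lra.
have b1 : 1 - (r%:R / n%:R : R) <= 1 by lra.
split; first by rewrite /pr mulr_gt0 // exprn_gt0.
rewrite /pr; apply: (@le_trans _ _ (r%:R / n%:R * 1)); last by lra.
rewrite ler_wpM2l ?(ltW a0) //; exact: exprn_ile1 (ltW b0) b1.
Qed.

Lemma thr_ge0 r : (1 <= r)%N -> 0 <= threshold n Rp r.
Proof.
move=> r1; rewrite /threshold.
have e0 : 0 <= expR 1 * n%:R / r%:R :> R.
  apply: mulr_ge0; last by rewrite invr_ge0.
  by apply: mulr_ge0; [exact: ltW (expR_gt0 _)|].
apply: mulr_ge0; first by apply: mulr_ge0 => //; exact: exprn_ge0.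
apply: ln_ge0.
have : (1 : R) <= n%:R by rewrite ler1n; lia.
move=> H; apply: (@le_trans _ _ (1 * 1)); first by rewrite mulr1.
by apply: ler_pM.
Qed.

Lemma kk_thr r u : (1 <= r)%N -> threshold n Rp r < u.+1%:R -> kk r u = 1%N.
Proof.
move=> r1; rewrite -truncn_lt_nat ?thr_ge0 // /kk => H; lia.
Qed.

Lemma kk_nthr r u : (1 <= r)%N -> ~~ (threshold n Rp r < u.+1%:R) -> kk r u = (kk r u.+1).+1.
Proof.
move=> r1; rewrite -truncn_lt_nat ?thr_ge0 // /kk => H; lia.
Qed.

Lemma Vf_ge0 i f r : (1 <= r)%N -> (r + f <= cap)%N -> 0 <= Vf i f r.
Proof.
elim: f r => [|f IH] r r1 rf /=.
  by rewrite invr_ge0 ltW //; case: (pr_bounds i r1 _) => //; lia.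
have [p0 p1] := pr_bounds i r1 (ltac:(lia) : (r <= cap)%N).
apply: addr_ge0; first by rewrite invr_ge0 ltW.
apply: mulr_ge0; first by apply: exprn_ge0; lra.
apply: IH; lia.
Qed.

Lemma V_ge0 i r : (1 <= r)%N -> (r <= cap)%N -> 0 <= V i r.
Proof. move=> r1 rc; apply: Vf_ge0 => //; lia. Qed.

Lemma X_ge0 i r : (1 <= r)%N -> 0 <= X i r.
Proof. move=> r1; rewrite /X; case: ifP => // H; apply: V_ge0; lia. Qed.

Lemma W_ge0 i r u : (1 <= r)%N -> (r <= cap)%N -> 0 <= W i r u.
Proof.
move=> r1 rc; have [p0 p1] := pr_bounds i r1 rc.
apply: addr_ge0; first by rewrite invr_ge0 ltW.
by apply: mulr_ge0; [apply: exprn_ge0; lra | apply: X_ge0].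
Qed.

Lemma W0 i r : (1 <= r)%N -> (r <= cap)%N -> W i r 0 = V i r.
Proof.
move=> r1 rc; rewrite /W /X /V.
case: ltnP => H.
  by have -> : (cap - r = (cap - r.+1).+1)%N by lia.
have -> : (cap - r = 0)%N by lia.
by rewrite mulr0 addr0.
Qed.

Lemma W_step i r u : (1 <= r)%N -> (r <= cap)%N ->
  1 + (1 - pr i r) * (if threshold n Rp r < u.+1%:R then W i (minn r.+1 cap) 0 else W i r u.+1)
  <= W i r u.
Proof.
move=> r1 rc; have [p0 p1] := pr_bounds i r1 rc.
have pn0 : pr i r != 0 by rewrite gt_eqF.
case: ifP => Ht.
  rewrite [W i r u]/W (kk_thr r1 Ht) expr1.
  case: (ltnP r cap) => Hrc.
    have -> : minn r.+1 cap = r.+1 by lia.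
    rewrite W0 //.
    rewrite /X Hrc.
    have : 1 <= (pr i r)^-1 by rewrite invf_ge1.
    lra.
  have Hr : r = cap by lia.
  have -> : minn r.+1 cap = r by lia.
  rewrite W0 // /X /V Hr ltnn subnn /= mulr0 addr0.
  by rewrite -Hr; apply: eqle; field.
rewrite /W (kk_nthr r1 (negbT Ht)) exprS.
move: pn0; move: (pr i r) (X i r) (kk r u.+1) => p x k pn0.
apply: eqle; move: ((1 - p) ^+ k) => y; by field.
Qed.

End Lyap.

End P3.
Import P3.

Module P4.

Section Lyap2.
Variable R : realType.
Variable n : nat.
Variable Rp : R.
Hypothesis n2 : (2 <= n)%N.
Hypothesis Rp1 : 1 <= Rp.

Local Notation W := (W n Rp).
Local Notation F := (F n Rp).
Local Notation g := (g Rp).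
Local Notation cap := (cap n).

Lemma mut_ge0 r (x y : bits n) : (r <= n)%N -> 0 <= mutprob R r x y.
Proof.
move=> rn; have n0 : 0 < (n%:R : R) by rewrite ltr0n; lia.
have a0 : 0 <= (r%:R / n%:R : R) by rewrite divr_ge0.
have a1 : (r%:R / n%:R : R) <= 1 by rewrite ler_pdivrMr // mul1r ler_nat.
rewrite /mutprob; apply: prodr_ge0 => i _; case: ifP => _ //; lra.
Qed.

Lemma F_ge0 j : 0 <= F j.
Proof.
rewrite /P3.F; apply: sumr_ge0 => k _; apply: (W_ge0 n2 Rp1) => //; exact: (cap_ge1 n2 Rp1).
Qed.

Lemma F_split j : (j < n)%N -> F j = W j 1 0 + F j.+1.
Proof. by move=> Hj; rewrite /P3.F big_ltn. Qed.

Lemma F_mono j k : (j <= k)%N -> (k <= n)%N -> F k <= F j.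
Proof.
move=> jk kn; rewrite /P3.F (@big_cat_nat _ _ _ k j n _ _ jk kn) /= lerDr.
apply: sumr_ge0 => l _; apply: (W_ge0 n2 Rp1) => //; exact: (cap_ge1 n2 Rp1).
Qed.

Lemma indN (b : bool) : ((~~ b : nat)%:R : R) = 1 - (b : nat)%:R.
Proof. by case: b => /=; rewrite ?subrr ?subr0. Qed.

Lemma lyap (x : bits n) r u : x != ones n -> (1 <= r)%N -> (r <= cap)%N ->
  1 + \sum_(y : bits n) mutprob R r x y *
        (if y == ones n then 0 else g (sd_step Rp (x, r, u) y)) <= g (x, r, u).
Proof.
move=> Hx r1 rc.
have rn : (r <= n)%N by have := cap_lt n2 Rp1; lia.
set i := LeadingOnes x.
have Hi : (i < n)%N by exact: LO_ones_lt.
set W' := if threshold n Rp r < u.+1%:R then W i (minn r.+1 cap) 0 else W i r u.+1.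
have W'0 : 0 <= W'.
  rewrite /W'; case: ifP => _; apply: (W_ge0 n2 Rp1) => //; lia.
have term : forall y : bits n,
  mutprob R r x y * (if y == ones n then 0 else g (sd_step Rp (x, r, u) y))
  <= mutprob R r x y * (F i.+1 + ((~~ (i < LeadingOnes y)%N : nat)%:R) * W').
  move=> y; apply: ler_wpM2l; first exact: mut_ge0.
  case: (ltnP i (LeadingOnes y)) => Himp /=.
    rewrite mul0r addr0.
    case: eqP => Hy; first exact: F_ge0.
    rewrite /sd_step /= -/i Himp /P3.g /=.
    have Hyn : (LeadingOnes y < n)%N by apply: LO_ones_lt; apply/eqP.
    rewrite addrC -F_split //; apply: F_mono => //; lia.
  have Hy : y != ones n.
    by apply/eqP => Hy; move: Himp; rewrite Hy LO_ones leqNgt Hi.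
  rewrite (negbTE Hy) mul1r /sd_step /= -/i ltnNge Himp /=.
  set x' := if _ then y else x.
  have Hx' : LeadingOnes x' = i.
    rewrite /x'; case: ifP => // /andP [/eqP -> _] //.
  rewrite /W'; case: ifP => _; by rewrite /P3.g /= Hx'.
apply: (@le_trans _ _ (1 + \sum_(y : bits n) mutprob R r x y *
       (F i.+1 + ((~~ (i < LeadingOnes y)%N : nat)%:R) * W'))).
  by rewrite lerD2l; apply: ler_sum => y _; apply: term.
have -> : \sum_(y : bits n) mutprob R r x y *
       (F i.+1 + ((~~ (i < LeadingOnes y)%N : nat)%:R) * W')
  = F i.+1 + (1 - pr R n i r) * W'.
  rewrite (eq_bigr (fun y => mutprob R r x y * F i.+1 +
     (mutprob R r x y - mutprob R r x y * ((i < LeadingOnes y)%N : nat)%:R) * W')); last first.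
    by move=> y _; rewrite indN; ring.
  rewrite big_split /= -mulr_suml sum_mut mul1r -mulr_suml sumrB sum_mut sum_impr //.
have := W_step n2 Rp1 i u r1 rc.
rewrite /P3.g /= -/i -/W' /pr => H.
lra.
Qed.

End Lyap2.

End P4.
Import P4.

Module P5.

Section Surv.
Variable R : realType.
Variable n : nat.
Variable Rp : R.
Hypothesis n2 : (2 <= n)%N.
Hypothesis Rp1 : 1 <= Rp.

Definition inv (s : state n) :=
  [&& s.1.1 != ones n, (1 <= s.1.2)%N & (s.1.2 <= cap n)%N].

Lemma inv_step s y : inv s -> y != ones n -> inv (sd_step Rp s y).
Proof.
case: s => [[x r] u] /and3P [/= Hx r1 rc] Hy.
rewrite /sd_step; case: ifP => _; first by rewrite /inv /= Hy /=; exact: (cap_ge1 n2 Rp1).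
set x' := if _ then y else x.
have Hx' : x' != ones n by rewrite /x'; case: ifP.
case: ifP => _; rewrite /inv /= Hx' /=; last by rewrite r1 rc.
have := cap_ge1 n2 Rp1; rewrite /cap; move: (n./2) => c; lia.
Qed.

Lemma g_ge0 s : inv s -> 0 <= g Rp s.
Proof.
case: s => [[x r] u] /and3P [/= Hx r1 rc].
rewrite /g /=; apply: addr_ge0; first exact: (F_ge0 n2 Rp1).
exact: (W_ge0 n2 Rp1).
Qed.

Lemma surv_bound T s : inv s -> \sum_(t < T) survive Rp t s <= g Rp s.
Proof.
elim: T s => [|T IH] s Hs; first by rewrite big_ord0; exact: g_ge0.
rewrite big_ord_recl /=.
have rn : (s.1.2 <= n)%N.
  move/and3P: Hs => [_ _ rc]; have := cap_lt n2 Rp1; lia.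
have -> : \sum_(t < T) survive Rp (bump 0 t) s =
   \sum_(y : bits n) mutprob R s.1.2 s.1.1 y *
     (if y == ones n then 0 else \sum_(t < T) survive Rp t (sd_step Rp s y)).
  rewrite /= exchange_big /=; apply: eq_bigr => y _.
  case: eqP => _; first by rewrite mulr0 big1 // => t _; rewrite mulr0.
  by rewrite mulr_sumr.
apply: (@le_trans _ _ (1 + \sum_(y : bits n) mutprob R s.1.2 s.1.1 y *
     (if y == ones n then 0 else g Rp (sd_step Rp s y)))).
  rewrite lerD2l; apply: ler_sum => y _; apply: ler_wpM2l; first exact: mut_ge0.
  case: eqP => // /eqP Hy; apply: IH; exact: inv_step.
case: s Hs rn => [[x r] u] /and3P [/= Hx r1 rc] _ /=.
exact: (lyap n2 Rp1).
Qed.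

End Surv.

End P5.
Import P5.

Module P6.

Section Est.
Variable R : realType.

Lemma L1 (a : R) : 0 <= a -> a <= 1/2 -> expR (-(a + 2*a^+2)) <= 1 - a.
Proof.
move=> a0 a1; set y := a + 2 * a ^+ 2.
have h := expR_ge1Dx y; have e0 := expR_gt0 y.
rewrite expRN -[(expR _)^-1]mul1r ler_pdivrMr //.
have h2 : 1 <= (1 - a) * (1 + y) by rewrite /y; nra.
apply: le_trans h2 _; apply: ler_wpM2l; lra.
Qed.

Lemma eh : expR (1/2 : R) <= 2.
Proof.
have h := expR_ge1Dx (-(1/2) : R); rewrite expRN in h.
have e0 := expR_gt0 (1/2 : R).
move: h; rewrite -[(expR _)^-1]mul1r ler_pdivlMr //; lra.
Qed.

Lemma ehr (r : nat) : expR (r%:R / 2 : R) <= 2 ^+ r.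
Proof.
have -> : r%:R / 2 = r%:R * (1/2 : R) by rewrite mul1r.
rewrite expRM_natl.
apply: lerXn2r; [rewrite nnegrE; exact: ltW (expR_gt0 _) | rewrite nnegrE; lra | exact: eh].
Qed.

Variable n : nat.
Variable r : nat.
Hypothesis r1 : (1 <= r)%N.
Hypothesis r4 : (4 * r <= n)%N.

Let nn : R := n%:R.
Let rr : R := r%:R.
Let a : R := rr / nn.

Lemma nn_gt0 : 0 < nn.
Proof. rewrite /nn ltr0n; lia. Qed.
Lemma rr_ge1 : 1 <= rr.
Proof. by rewrite /rr ler1n. Qed.
Lemma a_n : a * nn = rr.
Proof. rewrite /a /nn; field; rewrite pnatr_eq0; lia. Qed.
Lemma rr4 : 4 * rr <= nn.
Proof. by rewrite /rr /nn -natrM ler_nat. Qed.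
Lemma a_bounds : 0 < a /\ a <= 1/4.
Proof.
have h := nn_gt0; have h1 := rr_ge1; have h4 := rr4.
split; first by rewrite /a divr_gt0 //; lra.
rewrite /a ler_pdivrMr //; lra.
Qed.

Lemma key_pow i : (i <= n)%N -> expR (- (rr + rr / 2)) <= (1 - a) ^+ i.
Proof.
move=> iN; have [a0 a4] := a_bounds.
have h1 := L1 (ltW a0) (ltac:(lra) : a <= 1/2).
apply: (@le_trans _ _ ((1 - a) ^+ n)); last first.
  by apply: ler_wiXn2l => //; lra.
apply: (@le_trans _ _ (expR (-(a + 2*a^+2)) ^+ n)); last first.
  by apply: lerXn2r; rewrite ?nnegrE //; lra.
rewrite -expRM_natr ler_expR.
have := a_n; rewrite -/nn => an.
have : 2 * a ^+ 2 * nn <= rr / 2.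
  have -> : 2 * a ^+ 2 * nn = 2 * a * rr by rewrite -an; ring.
  have := rr_ge1; nra.
rewrite -/nn; nra.
Qed.

Lemma pr_lb i : (i <= n)%N -> a * expR (- (rr + rr / 2)) <= pr R n i r.
Proof.
move=> iN; have [a0 a4] := a_bounds.
rewrite /pr -/nn -/rr -/a; apply: ler_wpM2l; [lra | exact: key_pow].
Qed.

Lemma prinv_ub i : (i <= n)%N -> (pr R n i r)^-1 <= nn * (2 ^+ r) ^+ 4.
Proof.
move=> iN; have [a0 a4] := a_bounds.
have e0 := expR_gt0 (- (rr + rr / 2)).
have p0 : 0 < a * expR (- (rr + rr / 2)) by apply: mulr_gt0.
apply: (@le_trans _ _ (a * expR (- (rr + rr / 2)))^-1).
  rewrite lef_pV2 ?posrE //; [exact: pr_lb | exact: lt_le_trans (pr_lb iN)].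
rewrite invfM expRN invrK.
have ha : a^-1 <= nn.
  rewrite /a invf_div ler_pdivrMr; last by have := rr_ge1; lra.
  have := nn_gt0; have := rr_ge1; nra.
have hE : expR (rr + rr / 2) <= (2 ^+ r) ^+ 4.
  apply: (@le_trans _ _ (expR (4%:R * (rr / 2)))).
    by rewrite ler_expR; have := rr_ge1; lra.
  rewrite expRM_natl; apply: lerXn2r; rewrite ?nnegrE; [exact: ltW (expR_gt0 _) | | exact: ehr].
  by apply: exprn_ge0.
apply: ler_pM => //; by rewrite invr_ge0 ltW.
Qed.

Variable Rp : R.
Hypothesis Rpn : n.+1%:R <= Rp.

Lemma coef_ge1 i : (i <= n)%N -> 1 <= pr R n i r * (2 * (expR 1 * nn / rr) ^+ r).
Proof.
move=> iN; have [a0 a4] := a_bounds.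
have hr := rr_ge1; have hn := nn_gt0.
rewrite -[expR 1 * nn / rr]mulrA; set b := nn / rr.
have ab : a * b = 1 by rewrite /a /b; field; apply/andP; split; rewrite gt_eqF //; lra.
have b2 : 2 <= b by rewrite /b ler_pdivlMr; [have := rr4; lra | lra].
apply: (@le_trans _ _ (a * expR (- (rr + rr / 2)) * (2 * (expR 1 * b) ^+ r))); last first.
  apply: ler_wpM2r; last exact: pr_lb.
  apply: mulr_ge0 => //; apply: exprn_ge0; apply: mulr_ge0; [exact: ltW (expR_gt0 _)|lra].
rewrite -mulrA exprMn -[expR 1 ^+ r]expRM_natl mulr1 -/rr.
rewrite opprD expRD.
have -> : a * (expR (- rr) * expR (- (rr / 2)) * (2 * (expR rr * b ^+ r)))
    = 2 * b ^+ r * a * expR (- (rr / 2)) * (expR rr * expR (-rr)) by ring.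
rewrite expRxMexpNx_1 mulr1.
have br : b ^+ r = b * b ^+ r.-1 by rewrite -exprS prednK.
have -> : 2 * b ^+ r * a * expR (- (rr / 2)) = 2 * b ^+ r.-1 * expR (- (rr / 2)) * (a * b).
  by rewrite br; ring.
rewrite ab mulr1.
have E2 : (2 ^+ r)^-1 <= expR (- (rr/2)).
  rewrite expRN lef_pV2 ?posrE ?expR_gt0 ?exprn_gt0 //; exact: ehr.
have Bp : 2 ^+ r.-1 <= b ^+ r.-1.
  by apply: lerXn2r; rewrite ?nnegrE //; lra.
have t2 : 2 ^+ r = 2 * 2 ^+ r.-1 :> R by rewrite -exprS prednK.
have p2 : 0 < 2 ^+ r.-1 :> R by apply: exprn_gt0.
have : 1 = 2 * 2 ^+ r.-1 * (2 ^+ r)^-1 :> R by rewrite t2; field; rewrite gt_eqF.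
move=> H1.
apply: (@le_trans _ _ (2 * 2^+r.-1 * (2^+r)^-1)); first by rewrite -H1.
apply: ler_pM; [lra | by rewrite invr_ge0 ltW // exprn_gt0 | lra | exact: E2].
Qed.


Lemma q_ub i : (i <= n)%N -> (1 - pr R n i r) ^+ kk n Rp r 0 <= (nn ^+ 2)^-1.
Proof.
move=> iN; have [a0 a4] := a_bounds.
have n2 : (2 <= n)%N by lia.
have hn := nn_gt0.
have Rp1 : 1 <= Rp.
  apply: le_trans Rpn; rewrite ler1n; lia.
have Rpn' : nn <= Rp by apply: le_trans Rpn; rewrite /nn ler_nat.
have [p0 p1] := pr_bounds n2 Rp1 i r1 (ltac:(rewrite /cap; lia) : (r <= cap n)%N).
set p := pr R n i r in p0 p1 *.
set T := threshold n Rp r.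
have T0 : 0 <= T by exact: (thr_ge0 n2 Rp1).
have -> : kk n Rp r 0 = (Num.truncn T).+1 by rewrite /kk subn0 /maxn.
set m := (Num.truncn T).+1.
have hm : T < m%:R by exact: truncnS_gt.
apply: (@le_trans _ _ (expR (- p) ^+ m)).
  apply: lerXn2r; rewrite ?nnegrE; [lra | exact: ltW (expR_gt0 _) | ].
  by have := expR_ge1Dx (- p); lra.
rewrite -expRM_natr.
have hpT : ln (nn * Rp) <= p * T.
  have hc := coef_ge1 iN.
  have hl : 0 <= ln (nn * Rp).
    apply: ln_ge0; rewrite -[1]mulr1; apply: ler_pM => //; try lra.
    by rewrite /nn ler1n; lia.
  rewrite /T /threshold -/nn -/rr -/p mulrA.
  by rewrite -{1}[ln _]mul1r; apply: ler_wpM2r.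
apply: (@le_trans _ _ (expR (- ln (nn * Rp)))).
  rewrite ler_expR; have : p * T <= p * m%:R by apply: ler_wpM2l; lra.
  lra.
rewrite expRN lnK ?posrE; last by apply: mulr_gt0; lra.
rewrite lef_pV2 ?posrE; [|apply: mulr_gt0; lra | by apply: exprn_gt0].
by rewrite expr2; apply: ler_wpM2l; lra.
Qed.

End Est.

End P6.
Import P6.

Module P7.

Lemma nat_big (n : nat) : (64 <= n)%N -> (n ^ 2 * 2 ^ n <= (n ^ 2) ^ (n %/ 4 - 1))%N.
Proof.
move=> hn.
set r0 := (n %/ 4)%N.
have h1 : (16 <= r0)%N by rewrite /r0; lia.
have h2 : (n <= 4 * r0 + 3)%N by rewrite /r0; lia.
rewrite -expnM.
have -> : (2 * (r0 - 1) = 2 + (2 * r0 - 4))%N by lia.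
rewrite expnD leq_mul2l; apply/orP; right.
apply: (@leq_trans (2 ^ (6 * (2 * r0 - 4)))).
  by rewrite leq_pexp2l //; lia.
rewrite expnM leq_exp2r //; lia.
Qed.

Section VB.
Variable R : realType.
Variable n : nat.
Variable Rp : R.
Hypothesis n64 : (64 <= n)%N.
Hypothesis Rpn : n.+1%:R <= Rp.

Let nn : R := n%:R.
Lemma n2 : (2 <= n)%N. Proof. lia. Qed.
Lemma Rp1 : 1 <= Rp. Proof. apply: le_trans Rpn; rewrite ler1n; lia. Qed.
Lemma nn_pos : 0 < nn. Proof. rewrite /nn ltr0n; lia. Qed.

Local Notation V := (V n Rp).
Local Notation cap := (cap n).

Lemma prinv_big i r : (i <= n)%N -> (1 <= r)%N -> (r <= cap)%N ->
  (pr R n i r)^-1 <= nn * 2 ^+ n.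
Proof.
move=> iN r1 rc.
have hn := nn_pos.
have [p0 p1] := pr_bounds n2 Rp1 i r1 rc.
have h2 : 0 < (2 ^+ n : R) by apply: exprn_gt0.
have hl : nn^-1 * (2 ^+ n)^-1 <= pr R n i r.
  rewrite /pr; apply: ler_pM.
  - by rewrite invr_ge0 ltW.
  - by rewrite invr_ge0 ltW.
  - rewrite /nn ler_pdivlMr // mulVf ?gt_eqF // ler1n; lia.
  have ha : (r%:R / n%:R : R) <= 1/2.
    have H : (r * 2 <= n)%N by move: rc; rewrite /P3.cap; lia.
    move: H; rewrite -(ler_nat R) natrM => H.
    rewrite ler_pdivrMr //; lra.
  apply: (@le_trans _ _ ((1 - r%:R / n%:R) ^+ n)); last first.
    apply: ler_wiXn2l => //; lra.
  rewrite -exprVn; apply: lerXn2r; rewrite ?nnegrE; lra.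
have hpos : 0 < nn^-1 * (2 ^+ n)^-1 by apply: mulr_gt0; rewrite invr_gt0.
apply: (@le_trans _ _ (nn^-1 * (2 ^+ n)^-1)^-1).
  by rewrite lef_pV2 ?posrE.
by rewrite invfM !invrK mulrC.
Qed.

Lemma q_le1 i r : (1 <= r)%N -> (r <= cap)%N -> (1 - pr R n i r) ^+ kk n Rp r 0 <= 1.
Proof.
move=> r1 rc; have [p0 p1] := pr_bounds n2 Rp1 i r1 rc.
apply: exprn_ile1; lra.
Qed.

Lemma V_rec i r : (1 <= r)%N -> (r < cap)%N ->
  V i r = (pr R n i r)^-1 + (1 - pr R n i r) ^+ kk n Rp r 0 * V i r.+1.
Proof.
move=> r1 rc; rewrite -(W0 n2 Rp1 i r1 (ltnW rc)) /W /X rc //.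
Qed.

Lemma V_cap i : V i cap = (pr R n i cap)^-1.
Proof. by rewrite /P3.V subnn. Qed.

Lemma V_big i d : (i <= n)%N -> forall r, (cap - r)%N = d -> (1 <= r)%N -> (r <= cap)%N ->
  V i r <= d.+1%:R * (nn * 2 ^+ n).
Proof.
move=> iN; elim: d => [|d IH] r Hd r1 rc.
  have -> : r = cap by lia.
  by rewrite V_cap mul1r; apply: prinv_big => //; exact: cap_ge1 n2 Rp1.
rewrite V_rec //; last by lia.
have h1 := prinv_big iN r1 rc.
have h2 := q_le1 i r1 rc.
have h3 : V i r.+1 <= d.+1%:R * (nn * 2 ^+ n) by apply: IH => //; lia.
have h4 : 0 <= V i r.+1 by apply: (V_ge0 n2 Rp1) => //; lia.
have h5 : 0 <= (1 - pr R n i r) ^+ kk n Rp r 0.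
  have [p0 p1] := pr_bounds n2 Rp1 i r1 rc; apply: exprn_ge0; by rewrite subr_ge0.
rewrite -[d.+2]addn1 natrD mulrDl mul1r addrC.
apply: lerD => //.
apply: le_trans h3; rewrite -[X in _ <= X]mul1r; apply: ler_wpM2r => //.
Qed.


Let K (r : nat) : R := (2 ^+ r) ^+ 4.
Let r0 := (n %/ 4)%N.
Let B : R := nn * (nn * 2 ^+ n).
Let y : R := (nn ^+ 2)^-1.

Lemma K_ge0 r : 0 <= K r.
Proof. by rewrite /K; apply: exprn_ge0; apply: exprn_ge0. Qed.

Lemma KS r : K r.+1 = 16 * K r.
Proof. by rewrite /K (exprS (2:R) r); ring. Qed.

Lemma r0_cap : (r0 <= cap)%N.
Proof. rewrite /r0 /P3.cap; lia. Qed.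

Lemma V_small i d : (i <= n)%N -> forall r, (r0 - r)%N = d -> (1 <= r)%N -> (r <= r0)%N ->
  V i r <= 2 * nn * K r + B * y ^+ d.
Proof.
move=> iN; have hn := nn_pos; have hc := r0_cap.
have y0 : 0 <= y by rewrite /y invr_ge0 exprn_ge0 // ltW.
have y32 : y * 32 <= 1.
  rewrite /y mulrC ler_pdivrMr ?exprn_gt0 // mul1r.
  have : (64 : R) <= nn by rewrite /nn (ler_nat R 64 n).
  nra.
elim: d => [|d IH] r Hd r1 rr0.
  have -> : r = r0 by lia.
  rewrite expr0 mulr1.
  apply: (@le_trans _ _ B).
    apply: le_trans (V_big iN (erefl _) _ r0_cap) _.
      rewrite /r0; lia.
    rewrite /B; apply: ler_wpM2r.
      by apply: mulr_ge0; [lra | apply: exprn_ge0].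
    by rewrite /nn ler_nat; have := cap_lt n2 Rp1; lia.
  rewrite lerDr; apply: mulr_ge0; [lra | exact: K_ge0].
have rc : (r < cap)%N by lia.
rewrite V_rec //.
have r4 : (4 * r <= n)%N by rewrite /r0 in rr0; lia.
have h1 := prinv_ub R r1 r4 iN.
have h2 := q_ub r1 r4 Rpn iN.
have h3 : V i r.+1 <= 2 * nn * K r.+1 + B * y ^+ d by apply: IH => //; lia.
have h4 : 0 <= V i r.+1 by apply: (V_ge0 n2 Rp1) => //; lia.
have h5 : 0 <= (1 - pr R n i r) ^+ kk n Rp r 0.
  have [p0 p1] := pr_bounds n2 Rp1 i r1 (ltnW rc); apply: exprn_ge0; by rewrite subr_ge0.
apply: (@le_trans _ _ (nn * K r + y * (2 * nn * K r.+1 + B * y ^+ d))).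
  apply: lerD; first exact: h1.
  apply: ler_pM => //; exact: h2.
rewrite KS (exprS y d).
have hK := K_ge0 r.
have : y * (2 * nn * (16 * K r)) <= nn * K r.
  have -> : y * (2 * nn * (16 * K r)) = (y * 32) * (nn * K r) by ring.
  apply: ler_piMl => //; apply: mulr_ge0 => //; exact: ltW.
move=> H.
have -> : y * (2 * nn * (16 * K r) + B * y ^+ d) = y * (2 * nn * (16 * K r)) + B * (y * y ^+ d) by ring.
have -> : 2 * nn * K r + B * (y * y ^+ d) = nn * K r + (nn * K r + B * (y * y ^+ d)) by ring.
by rewrite lerD2l lerD2r.
Qed.

Lemma V1_bound i : (i <= n)%N -> V i 1 <= 33 * nn.
Proof.
move=> iN; have hn := nn_pos.
have := V_small iN (erefl _) (leqnn 1) (ltac:(rewrite /r0; lia) : (1 <= r0)%N).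
have -> : K 1 = 16 by rewrite /K expr1; ring.
have HB : B * y ^+ (r0 - 1) <= 1.
  have hb := nat_big n64.
  have : (n ^ 2 * 2 ^ n)%:R <= ((n ^ 2) ^ (n %/ 4 - 1))%:R :> R by rewrite ler_nat.
  rewrite natrM !natrX -/nn -/r0 => H.
  have hy : y ^+ (r0 - 1) = ((nn ^+ 2) ^+ (r0 - 1))^-1 by rewrite /y exprVn.
  have hp : 0 < (nn ^+ 2) ^+ (r0 - 1) by apply: exprn_gt0; apply: exprn_gt0.
  rewrite hy /B ler_pdivrMr // mul1r.
  by apply: le_trans H; rewrite mulrA expr2.
have : 1 <= nn by rewrite /nn ler1n; lia.
lra.
Qed.

End VB.

End P7.
Import P7.

Module P8.

Section Final.
Variable R : realType.
Variable n : nat.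
Variable Rp : R.
Hypothesis n64 : (64 <= n)%N.
Hypothesis Rpn : n.+1%:R <= Rp.

Lemma N2 : (2 <= n)%N.
Proof. exact: leq_trans n64. Qed.
Lemma RP1 : 1 <= Rp.
Proof. apply: le_trans Rpn; by rewrite ler1n. Qed.

Lemma survive_ge0 t (s : state n) : P5.inv s -> 0 <= survive Rp t s.
Proof.
elim: t s => [|t IH] s Hs /=; first by [].
have rn : (s.1.2 <= n)%N.
  move/and3P: Hs => [_ _ rc]; have := cap_lt N2 RP1; lia.
apply: sumr_ge0 => y _; apply: mulr_ge0; first exact: (mut_ge0 N2 RP1).
case: eqP => // /eqP Hy; apply: IH; exact: (inv_step N2 RP1 Hs Hy).
Qed.

Lemma F0_bound : F n Rp 0 <= 33 * (n%:R) ^+ 2.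
Proof.
rewrite /P3.F.
apply: (@le_trans _ _ (\sum_(0 <= k < n) (33 * n%:R : R))).
  rewrite big_nat_cond [X in _ <= X]big_nat_cond; apply: ler_sum => k /andP [/andP [_ Hk] _].
  rewrite (W0 N2 RP1) //; last exact: cap_ge1 N2 RP1.
  apply: (V1_bound n64 Rpn); exact: ltnW.
rewrite sumr_const_nat subn0 expr2; apply: eqle; ring.
Qed.

Lemma partial_bound T : \sum_(0 <= t < T) tail_prob n Rp t <= 33 * (n%:R) ^+ 2.
Proof.
apply: le_trans F0_bound.
rewrite /tail_prob -mulr_sumr exchange_big /=.
have h2 : 0 < (2 ^+ n : R) by apply: exprn_gt0.
apply: (@le_trans _ _ ((2 ^+ n)^-1 * \sum_(x0 : bits n) F n Rp 0)).
  apply: ler_wpM2l; first by rewrite invr_ge0 ltW.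
  apply: ler_sum => x0 _.
  have -> : \sum_(0 <= i < T) (if x0 == ones n then 0 else survive Rp i (x0, 1%N, 0%N))
     = if x0 == ones n then 0 else \sum_(0 <= i < T) survive Rp i (x0, 1%N, 0%N).
    by case: eqP => _ //; rewrite big1.
  case: eqP => [_|/eqP Hx]; first exact: (F_ge0 N2 RP1).
  have Hinv : P5.inv (x0, 1%N, 0%N).
    by rewrite /P5.inv /= Hx /=; exact: cap_ge1 N2 RP1.
  have := surv_bound N2 RP1 T Hinv.
  rewrite -(big_mkord xpredT (fun i => survive Rp i (x0, 1%N, 0%N))) => H.
  apply: le_trans H _.
  rewrite /g /= addrC -F_split //; last exact: LO_ones_lt.
  apply: (F_mono N2 RP1) => //; exact: LO_le.
rewrite sumr_const card_ffun card_bool card_ord.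
rewrite -[F n Rp 0 *+ _]mulr_natr natrX mulrCA mulVf ?mulr1 //; rewrite gt_eqF //.
Qed.

Lemma tail_ge0 t : 0 <= tail_prob n Rp t.
Proof.
rewrite /tail_prob; apply: mulr_ge0; first by rewrite invr_ge0 exprn_ge0.
apply: sumr_ge0 => x0 _; case: eqP => [//|/eqP Hx].
apply: survive_ge0; rewrite /P5.inv /= Hx /=; exact: cap_ge1 N2 RP1.
Qed.

Lemma ER_bound : (expected_runtime n Rp <= (33 * (n%:R) ^+ 2)%:E)%E.
Proof.
rewrite /expected_runtime.
apply: lime_le.
  by apply: is_cvg_nneseries => k _ _; rewrite lee_fin tail_ge0.
apply: nearW => T.
by rewrite sumEFin lee_fin partial_bound.
Qed.

End Final.

End P8.
Import P8.

Theorem mainTheorem6 (R : realType) (c : nat) :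
  exists (C : R) (n0 : nat), 0 < C /\
    forall (n : nat) (Rp : R),
      (n0 <= n)%N -> ~~ odd n ->
      (n.+1)%:R <= Rp -> Rp <= (n%:R) ^+ c ->
      (expected_runtime n Rp <= (C * (n%:R) ^+ 2)%:E)%E.
Proof.
exists 33, 64%N; split; first by rewrite ltr0n.
move=> n Rp hn _ hR _; exact: ER_bound.
Qed.
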